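(* Let $G$ be a finite connected graph with a real structure and let $D$ be a real divisor on $G$. Then $\operatorname{rk}_{\mathbb R}(D)\ge \operatorname{rk}(D)$.
   Context: A finite graph $G$ has vertex set $V(G)$, edge set $E(G)$ and incidence function $\psi$ assigning to each edge a set of one or two vertices (loops and multiple edges allowed). A real structure on $G$ is a pair of involutions of $V(G)$ and $E(G)$, written $v\mapsto\overline v$, $e\mapsto\overline e$, with $\psi(\overline e)=\overline{\psi(e)}$. A divisor is an element $D=\sum_{v}D(v)v$ of the free abelian group $\operatorname{Div}(G)$ on $V(G)$; $D\ge0$ means all $D(v)\ge0$; $\deg D=\sum_v D(v)$. For $f:V(G)\to\mathbb Z$, the principal divisor $\Delta(f)$ is given by $\Delta(f)(v)=\sum_{e\in E(G),\,\psi(e)=\{v,w\}}(f(w)-f(v))$. $D_1\sim D_2$ iff $D_2-D_1=\Delta(f)$ for some $f$. $|D|=\{D'\ge0: D'\sim D\}$. The rank $\operatorname{rk}(D)$ is $-1$ if $|D|=\emptyset$, and otherwise the maximal integer $r$ such that for every effective $E$ of degree $r$ there is $D'\in|D|$ with $D'-E\ge0$. The conjugate divisor is $\overline D(v)=D(\overline v)$; $D$ is real if $\overline D=D$. The real rank $\operatorname{rk}_{\mathbb R}(D)$ of a real divisor $D$ is the maximal integer $r$ such that for every real effective divisor $E$ of degree $r$ there is a real divisor $D'\in|D|$ with $D'-E\ge0$ (with value $-1$ if no such $r\ge0$ exists). *)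

(* Defs.v *)
From mathcomp Require Import all_boot all_order all_algebra.
From Stdlib Require Import ClassicalEpsilon.
Set Implicit Arguments. Unset Strict Implicit. Unset Printing Implicit Defensive.
Import Order.TTheory GRing.Theory Num.Theory.
Local Open Scope ring_scope.

Section GraphDivisors.
Variables (V E : finType) (psi : E -> {set V}).
(* psi e is the set of one or two endpoints of the edge e (loops and
   multiple edges allowed). *)

Definition incidence_ok := forall e, (0 < #|psi e| <= 2)%N.

Definition adj : rel V := fun u v => [exists e, (u \in psi e) && (v \in psi e)].
Definition connected_graph := #|V| != 0%N /\ forall u v, connect adj u v.

Definition divisor := V -> int.
Definition effective (D : divisor) := forall v, 0 <= D v.
Definition deg (D : divisor) : int := \sum_(v : V) D v.

(* Delta(f)(v) = sum over edges e with psi e = {v, w} of (f w - f v);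
   for a loop psi e :\ v is empty, contributing 0. *)
Definition principal (f : V -> int) : divisor :=
  fun v => \sum_(e : E | v \in psi e) \sum_(w in psi e :\ v) (f w - f v).

Definition lin_equiv (D1 D2 : divisor) :=
  exists f : V -> int, forall v, D2 v - D1 v = principal f v.

Definition in_linsys (D D' : divisor) := effective D' /\ lin_equiv D D'.

Definition rank_cond (D : divisor) (r : nat) :=
  forall Ed : divisor, effective Ed -> deg Ed <= r%:Z ->
    exists D', in_linsys D D' /\ effective (fun v => D' v - Ed v).

Variable cV : V -> V.
Definition conj_div (D : divisor) : divisor := fun v => D (cV v).
Definition real_div (D : divisor) := forall v, conj_div D v = D v.

Definition real_rank_cond (D : divisor) (r : nat) :=
  forall Ed : divisor, effective Ed -> real_div Ed -> deg Ed <= r%:Z ->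
    exists D', real_div D' /\ in_linsys D D' /\ effective (fun v => D' v - Ed v).

End GraphDivisors.

Definition max_index (P : nat -> Prop) : int :=
  match excluded_middle_informative
          (exists n, P n /\ forall m, P m -> (m <= n)%N) with
  | left H => Posz (proj1_sig (constructive_indefinite_description _ H))
  | right _ => -1
  end.

Definition rank (V E : finType) (psi : E -> {set V}) (D : divisor V) : int :=
  max_index (rank_cond psi D).

Definition real_rank (V E : finType) (psi : E -> {set V}) (cV : V -> V)
  (D : divisor V) : int :=
  max_index (real_rank_cond psi cV D).

(* Main.v *)
Require Import Defs.
From mathcomp Require Import all_boot all_order all_algebra.
From Stdlib Require Import ClassicalEpsilon.
Import Order.TTheory GRing.Theory Num.Theory.
Local Open Scope ring_scope.

Section L.
Variables (V E : finType) (psi : E -> {set V}) (cV : V -> V) (cE : E -> E).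
Hypotheses (HcV : involutive cV) (HcE : involutive cE)
  (Hcompat : forall e, psi (cE e) = cV @: psi e).

Lemma principal_conj (f : V -> int) v :
  principal psi f (cV v) = principal psi (fun x => f (cV x)) v.
Proof.
rewrite /principal (reindex_inj (inv_inj HcE)) /=.
apply: eq_big => [e|e _]; first by rewrite Hcompat mem_imset //; exact: inv_inj.
rewrite (reindex_inj (inv_inj HcV)) /=.
apply: eq_big => [w|w _]; last by [].
by rewrite !inE Hcompat mem_imset ?(inj_eq (inv_inj HcV)) //; exact: inv_inj.
Qed.

Lemma principal_mono (f g : V -> int) v :
  (forall w, f w - f v <= g w - g v) -> principal psi f v <= principal psi g v.
Proof.
move=> H; rewrite /principal; apply: ler_sum => e _; apply: ler_sum => w _; exact: H.
Qed.

Lemma deg_principal f : deg (principal psi f) = 0.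
Proof.
rewrite /deg /principal.
rewrite (exchange_big_dep predT) //=.
apply: big1 => e _.
pose A := psi e.
have H : forall F : V -> V -> int,
  \sum_(i | i \in A) \sum_(w in A :\ i) F i w =
  \sum_i \sum_w (if (i \in A) && (w \in A) && (w != i) then F i w else 0).
  move=> F; rewrite big_mkcond; apply: eq_bigr => i _.
  rewrite big_mkcond; case: (i \in A) => /=; last by rewrite big1.
  by apply: eq_bigr => w _; rewrite !inE andbC.
rewrite H.
under eq_bigr do under eq_bigr do rewrite (fun_if (fun x => x)).
transitivity (\sum_i \sum_w (if (i \in A) && (w \in A) && (w != i) then f w else 0)
  - \sum_i \sum_w (if (i \in A) && (w \in A) && (w != i) then f i else 0)).
  rewrite -sumrB; apply: eq_bigr => i _; rewrite -sumrB; apply: eq_bigr => w _.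
  by case: ifP; rewrite ?subr0.
rewrite exchange_big /=; apply/eqP; rewrite subr_eq0; apply/eqP.
apply: eq_bigr => i _; apply: eq_bigr => w _.
by rewrite eq_sym [(w \in A) && _]andbC.
Qed.

Lemma rank_to_real (D : divisor V) (HD : real_div cV D) r :
  rank_cond psi D r -> real_rank_cond psi cV D r.
Proof.
move=> Hr Ed HE HEr HEd.
have [D' [[HD'1 [f Hf]] HD'2]] := Hr Ed HE HEd.
pose h := fun x => Num.max (f x) (f (cV x)).
have hc : forall x, h (cV x) = h x by move=> x; rewrite /h HcV maxC.
pose D'' := fun v => D v + principal psi h v.
have HD'' : forall v, 0 <= D'' v - Ed v.
  move=> v; rewrite /D''.
  case: (leP (f (cV v)) (f v)) => Hfv.
  - have Hhv : h v = f v by rewrite /h max_l.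
    apply: le_trans (HD'2 v) _.
    have -> : D' v = D v + principal psi f v by rewrite -Hf addrC subrK.
    apply: lerB => //; apply: lerD => //; apply: principal_mono => w.
    by rewrite Hhv; apply: lerB => //; rewrite /h le_max lexx.
  - have Hhv : h v = f (cV v) by rewrite /h max_r // ltW.
    apply: le_trans (HD'2 (cV v)) _.
    have -> : D' (cV v) = D (cV v) + principal psi f (cV v) by rewrite -Hf addrC subrK.
    rewrite -[D (cV v)]/(conj_div cV D v) HD -[Ed (cV v)]/(conj_div cV Ed v) HEr.
    rewrite principal_conj; apply: lerB => //; apply: lerD => //; apply: principal_mono => w.
    by rewrite Hhv; apply: lerB => //; rewrite /h le_max lexx orbT.
exists D''; split; [|split; [split|]] => //.
- move=> v; rewrite /conj_div /D''.
  rewrite -[D (cV v)]/(conj_div cV D v) HD principal_conj.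
  congr (_ + _); rewrite /principal; apply: eq_bigr => e _; apply: eq_bigr => w _.
  by rewrite !hc.
- move=> v; apply: le_trans (HD'' v) _; by rewrite lerBlDr lerDl HE.
- by exists h => v; rewrite /D'' addrC addKr.
Qed.
End L.

Lemma max_index_ge (P : nat -> Prop) : -1 <= max_index P.
Proof. by rewrite /max_index; case: excluded_middle_informative. Qed.

Lemma max_index_mono (P Q : nat -> Prop) (B : nat) :
  (forall n, P n -> Q n) -> (forall n, Q n -> (n < B)%N) ->
  max_index P <= max_index Q.
Proof.
move=> HPQ HB.
rewrite [max_index P]/max_index; case: excluded_middle_informative => [HP|HP];
  last exact: max_index_ge.
case: constructive_indefinite_description => n /= [Pn _].
rewrite /max_index; case: excluded_middle_informative => [HQ|HQ].
  case: constructive_indefinite_description => m /= [_ Hm].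
  by rewrite lez_nat; apply: Hm; apply: HPQ.
exfalso; apply: HQ.
pose q := fun k => is_left (excluded_middle_informative (Q k)).
have qP : forall k, q k <-> Q k.
  by move=> k; rewrite /q; case: excluded_middle_informative.
have ex : exists k, q k by exists n; apply/qP/HPQ.
have ub : forall k, q k -> (k <= B)%N by move=> k /qP /HB /ltnW.
case: (ex_maxnP ex ub) => m /qP Qm Hm.
by exists m; split => // k /qP; apply: Hm.
Qed.

Lemma sum_eq1 (T : finType) (a : T) : \sum_(u : T) ((u == a)%:R : int) = 1.
Proof.
rewrite (bigD1 a) //= eqxx big1 ?addr0 // => u /negbTE ->; by [].
Qed.

Theorem proposition1 (V E : finType) (psi : E -> {set V})
  (cV : V -> V) (cE : E -> E)
  (Hinc : incidence_ok psi)
  (HcV : involutive cV) (HcE : involutive cE)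
  (Hcompat : forall e, psi (cE e) = cV @: psi e)
  (Hconn : connected_graph psi)
  (D : divisor V) (HD : real_div cV D) :
  rank psi D <= real_rank psi cV D.
Proof.
pose k := (`|deg D|%N).+1.
apply: (@max_index_mono _ _ (k + k)%N).
  by move=> n; apply: (@rank_to_real V E psi cV cE HcV HcE Hcompat D HD n).
move=> m Hm; rewrite ltnNge; apply/negP => Hkm.
case: Hconn; rewrite -lt0n => /card_gt0P [v0 _] _.
pose Ed : divisor V := fun u => k%:Z * ((u == v0)%:R + (u == cV v0)%:R).
have HEe : effective Ed by move=> u; rewrite /Ed mulr_ge0 // addr_ge0.
have HEr : real_div cV Ed.
  move=> u; rewrite /conj_div /Ed.
  have -> : (cV u == v0) = (u == cV v0).
    by apply/eqP/eqP => [<-|->]; rewrite HcV.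
  have -> : (cV u == cV v0) = (u == v0) by rewrite (inj_eq (inv_inj HcV)).
  by rewrite addrC.
have degE : deg Ed = (k + k)%N.
  rewrite /deg /Ed -mulr_sumr big_split /= !sum_eq1.
  by rewrite mulrDr mulr1 PoszD.
have [D' [_ [[HD'1 [f Hf]] HD'2]]] := Hm Ed HEe HEr ltac:(by rewrite degE lez_nat).
have degD' : deg D' = deg D.
  rewrite /deg (eq_bigr (fun v => D v + principal psi f v)).
    by rewrite big_split /=; have := @deg_principal V E psi f; rewrite /deg => ->; rewrite addr0.
  by move=> v _; rewrite -Hf addrC subrK.
have : deg Ed <= deg D'.
  by rewrite /deg; apply: ler_sum => v _; rewrite -subr_ge0; apply: HD'2.
rewrite degD' degE; apply/negP; rewrite -ltNge.
apply: le_lt_trans (ler_norm (deg D)) _.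
by rewrite -abszE ltz_nat /k addSn ltnS leq_addr.
Qed.
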